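(* Let $\mathfrak g$ be a simple Lie superalgebra with an invariant supersymmetric bilinear form $(\cdot|\cdot)$, let $x\in\mathfrak g$, and let $\phi$ be a conjugate-linear involution of $\mathfrak g$ such that $(x|x)$ is a non-zero real number and $\phi(x)=x$. Then $\overline{(\phi(a)|\phi(b))}=(a|b)$ for all $a,b\in\mathfrak g$.
   Context: A conjugate-linear involution of a Lie superalgebra is a conjugate-linear, parity-preserving bijection $\phi$ with $\phi([a,b])=[\phi(a),\phi(b)]$ and $\phi^2=\mathrm{id}$. *)

(* Defs.v *)
From mathcomp Require Import all_boot all_algebra complex reals.
Set Implicit Arguments. Unset Strict Implicit. Unset Printing Implicit Defensive.
Import GRing.Theory Num.Theory.
Local Open Scope ring_scope.

(* A finite-dimensional complex super vector space is a vectType V over R[i]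
   together with a linear idempotent p0 : V -> V, the projection onto the even
   part V_0 along the odd part V_1 (so V_0 = im p0, V_1 = ker p0). *)

Section LieSuper.
Variables (R : realType).
Local Notation C := (R[i]).
Variable (V : vectType C).

Definition homog (p0 : V -> V) (i : bool) (a : V) : Prop :=
  if i then p0 a = 0 else p0 a = a.

Definition is_parity_proj (p0 : V -> V) : Prop :=
  (forall (k : C) a b, p0 (k *: a + b) = k *: p0 a + p0 b) /\
  (forall a, p0 (p0 a) = p0 a).

Definition ssign (i j : bool) : C := (-1) ^+ (i && j).

Definition is_lie_superalgebra (p0 : V -> V) (br : V -> V -> V) : Prop :=
  is_parity_proj p0 /\
  (forall (k : C) a a' b, br (k *: a + a') b = k *: br a b + br a' b) /\
  (forall (k : C) a b b', br a (k *: b + b') = k *: br a b + br a b') /\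
  (forall i j a b, homog p0 i a -> homog p0 j b -> homog p0 (i (+) j) (br a b)) /\
  (forall i j a b, homog p0 i a -> homog p0 j b ->
      br a b = - (ssign i j *: br b a)) /\
  (forall i j a b c, homog p0 i a -> homog p0 j b ->
      br a (br b c) = br (br a b) c + ssign i j *: br b (br a c)).

Definition graded_ideal (p0 : V -> V) (br : V -> V -> V) (I : {vspace V}) : Prop :=
  (forall v, v \in I -> p0 v \in I) /\ (forall a v, v \in I -> br a v \in I).

Definition simple_lie_superalgebra (p0 : V -> V) (br : V -> V -> V) : Prop :=
  is_lie_superalgebra p0 br /\
  (exists a b, br a b != 0) /\
  (forall I : {vspace V}, graded_ideal p0 br I -> I = 0%VS \/ I = fullv).

Definition invariant_supersymmetric_form (p0 : V -> V) (br : V -> V -> V)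
    (form : V -> V -> C) : Prop :=
  (forall (k : C) a a' b, form (k *: a + a') b = k * form a b + form a' b) /\
  (forall (k : C) a b b', form a (k *: b + b') = k * form a b + form a b') /\
  (forall i j a b, homog p0 i a -> homog p0 j b -> i != j -> form a b = 0) /\
  (forall i j a b, homog p0 i a -> homog p0 j b -> form a b = ssign i j * form b a) /\
  (forall a b c, form (br a b) c = form a (br b c)).

Definition conj_linear_involution (p0 : V -> V) (br : V -> V -> V) (phi : V -> V) : Prop :=
  (forall a b, phi (a + b) = phi a + phi b) /\
  (forall (k : C) a, phi (k *: a) = k^* *: phi a) /\
  (forall i a, homog p0 i a -> homog p0 i (phi a)) /\
  bijective phi /\
  (forall a b, phi (br a b) = br (phi a) (phi b)) /\
  (forall a, phi (phi a) = a).

End LieSuper.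

(* Main.v *)
Require Import Defs.
From mathcomp Require Import all_boot all_algebra complex reals.
Import GRing.Theory Num.Theory.
Local Open Scope ring_scope.
Import VectorInternalTheory.

Section Helpers.
Variables (R : realType) (V : vectType R[i]).
Local Notation C := (R[i]).

Definition bil (F : V -> V -> C) :=
  (forall (k : C) a a' b, F (k *: a + a') b = k * F a b + F a' b) /\
  (forall (k : C) a b b', F a (k *: b + b') = k * F a b + F a b').

Definition ev (j : 'I_(dim V)) : V := r2v (delta_mx 0 j).

Lemma lin_expand (f : V -> C) : (forall k a b, f (k *: a + b) = k * f a + f b) ->
  forall a, f a = \sum_j v2r a 0 j * f (ev j).
Proof.
move=> hf a.
have f0 : f 0 = 0.
  by have := hf 1 0 0; rewrite scaler0 add0r mul1r => /eqP; rewrite -subr_eq subrr eq_sym => /eqP.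
have fadd x y : f (x + y) = f x + f y by have := hf 1 x y; rewrite scale1r mul1r.
have fsc k x : f (k *: x) = k * f x by have := hf k x 0; rewrite !addr0 f0 addr0.
rewrite -{1}[a]v2rK {1}(row_sum_delta (v2r a)) linear_sum.
apply: (big_rec2 (fun y1 y2 => f y1 = y2)) => [|j y1 y2 _ IH]; first by rewrite f0.
by rewrite fadd IH linearZ /= fsc.
Qed.

Definition gram (F : V -> V -> C) : 'M[C]_(dim V) := \matrix_(i, j) F (ev i) (ev j).

Lemma gram_row F : bil F -> forall a, \row_j F a (ev j) = v2r a *m gram F.
Proof.
move=> [h1 h2] a; apply/rowP => j; rewrite !mxE.
rewrite (@lin_expand (fun a => F a (ev j))); last by move=> *; apply: h1.
by apply: eq_bigr => i _; rewrite mxE.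
Qed.

Lemma ker_gram F : bil F -> forall a, (forall w, F a w = 0) <-> v2r a *m gram F = 0.
Proof.
move=> hF a; split.
  by move=> h; rewrite -gram_row //; apply/rowP => j; rewrite !mxE h.
move=> h w; rewrite (@lin_expand (F a)); last by move=> *; apply: hF.2.
rewrite big1 // => j _.
have := congr1 (fun M : 'rV_(dim V) => M 0 j) h; rewrite -gram_row // !mxE => ->.
by rewrite mulr0.
Qed.

Definition kspace F : {vspace V} := mx2vs (kermx (gram F)).

Lemma mem_kspace F : bil F -> forall a, a \in kspace F <-> (forall w, F a w = 0).
Proof.
move=> hF a; rewrite ker_gram //.
have -> : (a \in kspace F) = (v2r a <= kermx (gram F))%MS.
  by rewrite /kspace unfold_in /= !genmxE.
by rewrite sub_kermx; split => /eqP.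
Qed.


Section Ideal.
Variables (p0 : V -> V) (br : V -> V -> V).
Hypothesis HL : is_lie_superalgebra p0 br.

Lemma p0B a b : p0 (a - b) = p0 a - p0 b.
Proof.
have [[hp _] _] := HL.
by rewrite addrC -scaleN1r hp scaleN1r addrC.
Qed.

Lemma homog0 a : homog p0 false (p0 a).
Proof. by have [[_ hp] _] := HL; rewrite /homog hp. Qed.

Lemma homog1 a : homog p0 true (a - p0 a).
Proof. by have [[_ hp] _] := HL; rewrite /homog p0B hp subrr. Qed.

Lemma brDl a a' b : br (a + a') b = br a b + br a' b.
Proof. by have [_ [h _]] := HL; have := h 1 a a' b; rewrite !scale1r. Qed.

Lemma brDr a b b' : br a (b + b') = br a b + br a b'.
Proof. by have [_ [_ [h _]]] := HL; have := h 1 a b b'; rewrite !scale1r. Qed.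

Variable F : V -> V -> C.
Hypothesis hF : bil F.
Hypothesis Fev : forall i j a b, homog p0 i a -> homog p0 j b -> i != j -> F a b = 0.
Hypothesis Finv : forall a b c, F (br a b) c = F a (br b c).

Lemma FDl a a' b : F (a + a') b = F a b + F a' b.
Proof. by have := hF.1 1 a a' b; rewrite scale1r mul1r. Qed.
Lemma FDr a b b' : F a (b + b') = F a b + F a b'.
Proof. by have := hF.2 1 a b b'; rewrite scale1r mul1r. Qed.
Lemma FZl k a b : F (k *: a) b = k * F a b.
Proof.
have f0 : F 0 b = 0.
  by have := FDl 0 0 b; rewrite addr0 => /eqP; rewrite -subr_eq subrr eq_sym => /eqP.
by have := hF.1 k a 0 b; rewrite addr0 f0 addr0.
Qed.

Definition Kp a := forall w, F a w = 0.

Lemma Kp_add a b : Kp a -> Kp b -> Kp (a + b).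
Proof. by move=> ha hb w; rewrite FDl ha hb addr0. Qed.

Lemma Kp_sub a b : Kp a -> Kp b -> Kp (a - b).
Proof. by move=> ha hb w; rewrite -scaleN1r FDl FZl ha hb mulr0 addr0. Qed.

Lemma Kp_p0 a : Kp a -> Kp (p0 a).
Proof.
move=> ha w.
have e : F a (p0 w) = F (p0 a) (p0 w).
  by rewrite -{1}[a](subrK (p0 a)) FDl (Fev _ _ _ _ (homog1 a) (homog0 w)) // add0r.
rewrite -[w](subrK (p0 w)) FDr (Fev _ _ _ _ (homog0 a) (homog1 w)) // add0r.
by rewrite -e ha.
Qed.

Lemma Kp_br_h i j a v : homog p0 i a -> homog p0 j v -> Kp v -> Kp (br a v).
Proof.
move=> ha hv kv w.
have [_ [_ [_ [_ [hs _]]]]] := HL.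
by rewrite (hs _ _ _ _ ha hv) -scaleN1r FZl FZl Finv kv !mulr0.
Qed.

Lemma Kp_br a v : Kp v -> Kp (br a v).
Proof.
move=> kv.
have kv0 := @Kp_p0 v kv.
have kv1 : Kp (v - p0 v) by apply: Kp_sub.
have -> : br a v = br (a - p0 a) (v - p0 v) + br (a - p0 a) (p0 v)
    + (br (p0 a) (v - p0 v) + br (p0 a) (p0 v)).
  by rewrite -!brDr -brDl !subrK.
apply: Kp_add; apply: Kp_add.
- exact: (Kp_br_h _ _ _ _ (homog1 a) (homog1 v) kv1).
- exact: (Kp_br_h _ _ _ _ (homog1 a) (homog0 v) kv0).
- exact: (Kp_br_h _ _ _ _ (homog0 a) (homog1 v) kv1).
- exact: (Kp_br_h _ _ _ _ (homog0 a) (homog0 v) kv0).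
Qed.

Lemma kspace_ideal : graded_ideal p0 br (kspace F).
Proof.
split=> [v|a v]; rewrite !(mem_kspace _ hF); [exact: Kp_p0 | exact: Kp_br].
Qed.

End Ideal.
End Helpers.
Arguments kspace {R V}.
Arguments gram {R V}.
Arguments ev {R V}.
Arguments mem_kspace {R V}.
Arguments ker_gram {R V}.
Arguments bil {R V}.

Theorem lemma3p1 (R : realType) (V : vectType R[i])
    (p0 : V -> V) (br : V -> V -> V) (form : V -> V -> R[i])
    (phi : V -> V) (x : V) :
  simple_lie_superalgebra p0 br ->
  invariant_supersymmetric_form p0 br form ->
  conj_linear_involution p0 br phi ->
  form x x \is Num.real -> form x x != 0 -> phi x = x ->
  forall a b : V, (form (phi a) (phi b))^* = form a b.
Proof.
move=> [HL [_ Hsimp]] [f1 [f2 [fev [_ finv]]]] [phiD [phiZ [phiH [_ [phiB phiK]]]]].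
move=> hreal hnz hx.
have hB : bil form by split.
pose B' := fun a b => (form (phi a) (phi b))^*.
have hB' : bil B'.
  split => k a a' b; rewrite /B' ?phiD ?phiZ ?f1 ?f2 rmorphD rmorphM /= conjCK //.
have B'ev : forall i j a b, homog p0 i a -> homog p0 j b -> i != j -> B' a b = 0.
  move=> i j a b ha hb hij.
  by rewrite /B' (fev _ _ _ _ (phiH _ _ ha) (phiH _ _ hb) hij) conjC0.
have B'inv : forall a b c, B' (br a b) c = B' a (br b c).
  by move=> a b c; rewrite /B' phiB finv phiB.
have K0 : kspace form = 0%VS.
  case: (Hsimp _ (@kspace_ideal R V p0 br HL form hB fev finv)) => // Hf.
  have : x \in kspace form by rewrite Hf memvf.
  by move/(mem_kspace _ hB)/(_ x)/eqP; rewrite (negbTE hnz).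
have Gunit : gram form \in unitmx.
  rewrite unitmxE unitfE; apply/negP => /det0P [v vn0 hv].
  have : r2v v \in kspace form.
    by apply/(mem_kspace _ hB)/(ker_gram _ hB); rewrite r2vK.
  by rewrite K0 memv0 => /eqP h; move: vn0; rewrite -(r2vK v) h linear0 eqxx.
have xn0 : x != 0.
  apply: contraNneq hnz => ->.
  by have := f1 1 0 0 0; rewrite scale1r addr0 mul1r => /eqP; rewrite -subr_eq subrr eq_sym.
pose Q := gram B' *m invmx (gram form).
have : size (char_poly Q) != 1.
  rewrite size_char_poly; apply/negP => /eqP [Hd].
  move: xn0; rewrite -(v2rK x).
  have -> : v2r x = 0 by apply/rowP => -[j hj]; exfalso; rewrite Hd in hj.
  by rewrite linear0 eqxx.
move/closed_rootP => [l hl].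
have := hl; rewrite -eigenvalue_root_char => /eigenvalueP [v hv vn0].
pose Fl := fun a b => B' a b - l * form a b.
have hFl : bil Fl.
  split => k a a' b; rewrite /Fl ?(proj1 hB') ?(proj2 hB') ?f1 ?f2.
    by rewrite mulrDr mulrBr mulrCA opprD addrACA.
  by rewrite mulrDr mulrBr mulrCA opprD addrACA.
have Flev : forall i j a b, homog p0 i a -> homog p0 j b -> i != j -> Fl a b = 0.
  move=> i j a b ha hb hij.
  by rewrite /Fl (B'ev _ _ _ _ ha hb hij) (fev _ _ _ _ ha hb hij) mulr0 subrr.
have Flinv : forall a b c, Fl (br a b) c = Fl a (br b c).
  by move=> a b c; rewrite /Fl B'inv finv.
have gFl : gram Fl = gram B' - l *: gram form.
  by apply/matrixP => i j; rewrite !mxE.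
have hr : r2v v \in kspace Fl.
  apply/(mem_kspace _ hFl)/(ker_gram _ hFl); rewrite r2vK gFl mulmxBr -scalemxAr.
  have -> : v *m gram B' = (l *: v) *m gram form.
    by rewrite -hv /Q mulmxA mulmxKV.
  by rewrite -scalemxAl subrr.
have Kfull : kspace Fl = fullv.
  case: (Hsimp _ (@kspace_ideal R V p0 br HL Fl hFl Flev Flinv)) => // H0.
  move: hr; rewrite H0 memv0 => /eqP h.
  by move: vn0; rewrite -(r2vK v) h linear0 eqxx.
have HBl a b : B' a b = l * form a b.
  have : a \in kspace Fl by rewrite Kfull memvf.
  by move/(mem_kspace _ hFl)/(_ b)/eqP; rewrite /Fl subr_eq0 => /eqP.
have l1 : l = 1.
  have hc : (form x x)^* = form x x by apply/eqP; rewrite -CrealE.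
  have := HBl x x; rewrite /B' hx hc => /eqP.
  rewrite -{1}[form x x]mul1r -subr_eq0 -mulrBl mulf_eq0 (negbTE hnz) orbF.
  by rewrite subr_eq0 eq_sym => /eqP.
by move=> a b; have := HBl a b; rewrite /B' l1 mul1r.
Qed.
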